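(* A connected graph $G$ is well-bicovered with $b(G)=2$ if and only if $G=K_n$ for some $n\ge 2$.
   Context: All graphs are finite and simple; ''subgraph'' means induced subgraph. $b(G)$ denotes the maximum order of an induced bipartite subgraph of $G$. $G$ is well-bicovered if every vertex-inclusion-maximal induced bipartite subgraph of $G$ has the same order. *)

(* Defs.v *)
From mathcomp Require Import all_boot.
Set Implicit Arguments. Unset Strict Implicit. Unset Printing Implicit Defensive.

Definition simple_graph (T : finType) (e : rel T) : Prop :=
  symmetric e /\ irreflexive e.

Definition induced_bipartite (T : finType) (e : rel T) (S : {set T}) : Prop :=
  exists A : {set T}, A \subset S /\
    (forall x y, x \in A -> y \in A -> ~~ e x y) /\
    (forall x y, x \in S :\: A -> y \in S :\: A -> ~~ e x y).

Definition maximal_bipartite (T : finType) (e : rel T) (S : {set T}) : Prop :=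
  induced_bipartite e S /\
  forall S' : {set T}, S \proper S' -> ~ induced_bipartite e S'.

Definition is_b (T : finType) (e : rel T) (k : nat) : Prop :=
  (exists S : {set T}, induced_bipartite e S /\ #|S| = k) /\
  (forall S : {set T}, induced_bipartite e S -> #|S| <= k).

Definition well_bicovered (T : finType) (e : rel T) : Prop :=
  forall S1 S2 : {set T}, maximal_bipartite e S1 -> maximal_bipartite e S2 ->
    #|S1| = #|S2|.

Definition connected_graph (T : finType) (e : rel T) : Prop :=
  0 < #|T| /\ forall x y : T, connect e x y.

(* G is (isomorphic to) K_n: all distinct vertices adjacent; n = #|T|. *)
Definition is_complete (T : finType) (e : rel T) : Prop :=
  forall x y : T, x != y -> e x y.

(* Main.v *)
Require Import Defs.
From mathcomp Require Import all_boot.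
Set Implicit Arguments. Unset Strict Implicit.

Lemma small_bip (T : finType) (e : rel T) (S : {set T}) :
  simple_graph e -> #|S| <= 2 -> induced_bipartite e S.
Proof.
move=> [_ irr] hS.
case: (set_0Vmem S) => [->|[a aS]].
  exists set0; split; first exact: sub0set.
  by split=> x y; rewrite ?in_set0 // setD0 in_set0.
exists [set a]; split; first by rewrite sub1set.
split.
  by move=> x y /set1P -> /set1P ->; rewrite irr.
have h1 : #|S :\: [set a]| <= 1.
  by move: hS; rewrite (cardsD1 a S) aS.
move=> x y xS yS; have /card_le1_eqP H := h1.
by rewrite (H x y xS yS) irr.
Qed.

Lemma indep_le1 (T : finType) (e : rel T) (A : {set T}) :
  is_complete e -> (forall x y, x \in A -> y \in A -> ~~ e x y) -> #|A| <= 1.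
Proof.
move=> hc hA; rewrite leqNgt; apply/negP => /card_gt1P [x [y [xA yA xy]]].
by move: (hA x y xA yA); rewrite hc.
Qed.

Lemma bip_le2 (T : finType) (e : rel T) (S : {set T}) :
  is_complete e -> induced_bipartite e S -> #|S| <= 2.
Proof.
move=> hc [A [AS [h1 h2]]].
rewrite -(cardsID A S) (setIidPr AS).
have := indep_le1 hc h1; have := indep_le1 hc h2.
case: #|A| => [|[|]] //; case: #|S :\: A| => [|[|]] //.
Qed.

Theorem mainTheorem7 (T : finType) (e : rel T) :
  simple_graph e -> connected_graph e ->
  ((well_bicovered e /\ is_b e 2) <-> (is_complete e /\ 2 <= #|T|)).
Proof.
move=> hs [_ hcon]; have [sym irr] := hs; split.
- move=> [_ [[S [_ cS]] hb]].
  have h2 : 2 <= #|T| by rewrite -cS max_card.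
  split=> //.
  move=> x y xy; apply/negPn/negP => nxy.
  have /connectP [p pp ly] := hcon x y.
  case: p pp ly => [|z p] /=; first by move=> _ yx; rewrite yx eqxx in xy.
  move=> /andP [exz _] _.
  have zx : z != x by apply: contraTneq exz => ->; rewrite irr.
  have zy : z != y by apply: contraTneq exz => ->; rewrite (negbTE nxy).
  have hb3 : induced_bipartite e [set x; y; z].
    exists [set x; y]; split.
      by apply/subsetP => w; rewrite !inE => /orP [] ->; rewrite ?orbT.
    split.
      move=> u v; rewrite !inE => /orP [] /eqP -> /orP [] /eqP ->;
        by rewrite ?irr // 1?sym.
    move=> u v; rewrite !inE.
    case/andP => hu /orP [/orP []|] hu'; first by rewrite hu' in hu.
      by rewrite hu' orbT in hu.
    case/andP => hv /orP [/orP []|] hv'; first by rewrite hv' in hv.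
      by rewrite hv' orbT in hv.
    by rewrite (eqP hu') (eqP hv') irr.
  have := hb _ hb3.
  rewrite setUC cardsU1 cards2 xy !inE (negbTE zx) (negbTE zy). by [].
- move=> [hc h2].
  have Hmax : forall S, maximal_bipartite e S -> #|S| = 2.
    move=> S [bS hmax]; apply/eqP; rewrite eqn_leq (bip_le2 hc bS) /=.
    rewrite leqNgt; apply/negP => lt2.
    case: (pickP (fun w => w \notin S)) => [w /= wS|hall]; last first.
      have ST : S = setT by apply/setP => w; rewrite inE; move: (hall w) => /= /negbFE.
      by move: lt2; rewrite ST cardsT ltnNge h2.
    apply: (hmax (w |: S)).
      by apply: properUr; rewrite sub1set.
    apply: small_bip => //; rewrite cardsU1 wS; exact: lt2.
  split.
    by move=> S1 S2 /Hmax -> /Hmax ->.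
  split; last by move=> S; exact: bip_le2.
  have [x [y [_ _ xy]]] : exists x y, [/\ x \in T, y \in T & x != y].
    by apply/card_gt1P; rewrite cardT -cardE.
  exists [set x; y]; split; first by apply: small_bip; rewrite // cards2 xy.
  by rewrite cards2 xy.
Qed.
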